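(* For every finite ultrametric space $(X,d)$ with $|X|\geqslant 2$ the following are equivalent: (i) $(X,d)\in\mathfrak U$; (ii) for every $r\in\operatorname{Sp}(X)$ the graph $G'_{r,X}$ is complete bipartite.
   Context: For a metric space $(X,d)$, $\operatorname{Sp}(X)=\{d(x,y): x,y\in X,\ x\neq y\}$. $\mathfrak U$ denotes the class of finite ultrametric spaces $X$ with $|\operatorname{Sp}(X)|=|X|-1$. For $r\in\operatorname{Sp}(X)$, $G_{r,X}$ is the graph with vertex set $X$ in which $\{u,v\}$ is an edge iff $d(u,v)=r$. For a nonempty graph $G=(V,E)$, $G'$ denotes the subgraph induced by $V$ minus the set of isolated vertices of $G$. A complete bipartite graph is a nonempty graph whose vertex set is partitioned into two disjoint sets such that no edge joins vertices of the same set and any two vertices from different sets are adjacent. *)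

(* Defs.v *)
From mathcomp Require Import all_boot all_order all_algebra.
Set Implicit Arguments. Unset Strict Implicit. Unset Printing Implicit Defensive.
Import Order.TTheory GRing.Theory Num.Theory.
Local Open Scope ring_scope.

Section Defs.
Variables (R : realFieldType) (T : finType).

Definition metric (d : T -> T -> R) : Prop :=
  [/\ forall x y, 0 <= d x y,
      forall x y, d x y = 0 <-> x = y,
      forall x y, d x y = d y x &
      forall x y z, d x z <= d x y + d y z].

Definition ultrametric (d : T -> T -> R) : Prop :=
  metric d /\ forall x y z, d x z <= Num.max (d x y) (d y z).

Definition Sp (d : T -> T -> R) : seq R :=
  undup [seq d p.1 p.2 | p <- enum [pred p : T * T | p.1 != p.2]].

Definition in_U (d : T -> T -> R) : Prop := size (Sp d) = (#|T| - 1)%N.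

Definition G_adj (d : T -> T -> R) (r : R) : rel T :=
  fun u v => (u != v) && (d u v == r).

(* vertex set of G' : the non-isolated vertices of a graph (T, e) *)
Definition nonisolated (e : rel T) : {set T} := [set v | [exists u, e v u]].

Definition complete_bipartite (V : {set T}) (e : rel T) : Prop :=
  V != set0 /\
  exists A B : {set T},
    [/\ A :&: B = set0, A :|: B = V, A != set0, B != set0 &
        {in V &, forall u v, e u v = ((u \in A) && (v \in B)) || ((u \in B) && (v \in A))}].

End Defs.

(* Main.v *)
Require Import Defs.
From mathcomp Require Import all_boot all_order all_algebra.
From mathcomp Require Import zify.
Import Order.TTheory GRing.Theory Num.Theory.
Set Implicit Arguments. Unset Strict Implicit.
Local Open Scope ring_scope.

Lemma exists_minR (T : finType) (R : realFieldType) (P : pred T) (f : T -> R) i0 :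
  P i0 -> exists2 y, P y & forall z, P z -> f y <= f z.
Proof. by move=> Pi0; case: (@arg_minP _ R T i0 P f Pi0) => y Py H; exists y. Qed.

Definition rk (T : finType) (x : T) : nat := enum_rank x.

Lemma rk_inj (T : finType) : injective (@rk T).
Proof. by move=> x y /val_inj /enum_rank_inj. Qed.

Definition reps (T : finType) (P : rel T) : {set T} :=
  [set x | [forall y, P x y ==> (rk x <= rk y)%N]].

Definition eqv (T : finType) (P : rel T) :=
  [/\ reflexive P, symmetric P & transitive P].

Lemma rep_ex (T : finType) (P : rel T) x : eqv P ->
  exists2 p, P x p & p \in reps P.
Proof.
case=> Pr Ps Pt.
case: (@arg_minnP T x (P x) (@rk T) (Pr x)) => p Pxp Hm.
exists p => //; rewrite inE; apply/forallP => y; apply/implyP => Ppy.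
apply: Hm; exact: Pt Ppy.
Qed.

Lemma reps_uniq (T : finType) (P : rel T) a b : symmetric P ->
  a \in reps P -> b \in reps P -> P a b -> a = b.
Proof.
move=> Ps; rewrite !inE => /forallP Ha /forallP Hb Pab.
apply: rk_inj; apply/eqP; rewrite eqn_leq.
by rewrite (implyP (Ha b) Pab) (implyP (Hb a)) // Ps.
Qed.

Lemma notin_reps (T : finType) (P : rel T) x : x \notin reps P ->
  exists2 y, P x y & (rk y < rk x)%N.
Proof.
rewrite inE => /forallPn [y]; rewrite negb_imply -ltnNge => /andP [H1 H2].
by exists y.
Qed.

Lemma sum_ones (I : eqType) (s : seq I) (f : I -> nat) :
  (forall i, i \in s -> 0 < f i)%N -> (\sum_(i <- s) f i = size s)%N ->
  forall i, i \in s -> f i = 1%N.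
Proof.
have ge : forall s', (forall i, i \in s' -> 0 < f i)%N -> (size s' <= \sum_(i <- s') f i)%N.
  elim=> [|a s' IH] H; first by rewrite big_nil.
  rewrite big_cons /=; have := H a (mem_head _ _).
  have := IH (fun i hi => H i (mem_behead (s := _ :: _) hi)); lia.
elim: s => [|a s IH] H; first by [].
rewrite big_cons /= => E i; rewrite inE => /orP [/eqP ->|hi].
  have := H a (mem_head _ _); have := ge s (fun i hi => H i (mem_behead (s := _ :: _) hi)); lia.
apply: IH => //; first by move=> j hj; apply: H; rewrite inE hj orbT.
have := H a (mem_head _ _); have := ge s (fun i hi => H i (mem_behead (s := _ :: _) hi)); lia.
Qed.

Lemma bip_xor (T : finType) (V A B : {set T}) (e : rel T) :
  A :&: B = set0 -> A :|: B = V ->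
  {in V &, forall u v, e u v = ((u \in A) && (v \in B)) || ((u \in B) && (v \in A))} ->
  {in V &, forall u v, e u v = ((u \in A) != (v \in A))}.
Proof.
move=> hI hU he u v hu hv; rewrite he //.
have hB : forall w, w \in V -> (w \in B) = (w \notin A).
  move=> w; rewrite -hU inE => /orP [wA|wB].
    by move/setP: hI => /(_ w); rewrite !inE wA /= => ->.
  by move/setP: hI => /(_ w); rewrite !inE wB andbT => ->.
by rewrite !hB //; case: (u \in A); case: (v \in A).
Qed.

Definition Plt (R : realFieldType) (T : finType) (d : T -> T -> R) (b : R) : rel T :=
  fun x y => d x y < b.
Definition Ple (R : realFieldType) (T : finType) (d : T -> T -> R) (b : R) : rel T :=
  fun x y => d x y <= b.
Definition Fb (R : realFieldType) (T : finType) (d : T -> T -> R) (b : R) : {set T} :=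
  reps (Plt d b) :\: reps (Ple d b).

Lemma um_facts (R : realFieldType) (T : finType) (d : T -> T -> R) :
  ultrametric d ->
  [/\ forall x, d x x = 0, forall x y, d x y = d y x,
      forall x y, 0 <= d x y,
      forall x y, d x y = 0 -> x = y &
      forall x y z, d x z <= Num.max (d x y) (d y z)].
Proof.
case=> [[h0 hE hs _] hu]; split => //.
- by move=> x; apply/hE.
- by move=> x y /hE.
Qed.

Lemma eqv_lt (R : realFieldType) (T : finType) (d : T -> T -> R) b :
  ultrametric d -> 0 < b -> eqv (Plt d b).
Proof.
move=> /um_facts [h0 hs _ _ hu] b0; split.
- by move=> x; rewrite /Plt h0.
- by move=> x y; rewrite /Plt hs.
- move=> y x z; rewrite /Plt => h1 h2; apply: le_lt_trans (hu x y z) _.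
  by rewrite gt_max h1 h2.
Qed.

Lemma eqv_le (R : realFieldType) (T : finType) (d : T -> T -> R) b :
  ultrametric d -> 0 <= b -> eqv (Ple d b).
Proof.
move=> /um_facts [h0 hs _ _ hu] b0; split.
- by move=> x; rewrite /Ple h0.
- by move=> x y; rewrite /Ple hs.
- move=> y x z; rewrite /Ple => h1 h2; apply: le_trans (hu x y z) _.
  by rewrite ge_max h1 h2.
Qed.

Lemma SpP (R : realFieldType) (T : finType) (d : T -> T -> R) b :
  b \in Sp d <-> exists x y, x != y /\ d x y = b.
Proof.
rewrite /Sp mem_undup; split.
- by case/mapP => [[x y]]; rewrite mem_enum inE /= => hxy ->; exists x, y.
- case=> x [y [hxy <-]]; apply/mapP; exists (x, y) => //.
  by rewrite mem_enum inE.
Qed.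

Lemma Sp_pos (R : realFieldType) (T : finType) (d : T -> T -> R) b :
  ultrametric d -> b \in Sp d -> 0 < b.
Proof.
move=> /um_facts [h0 hs hp hE _] /SpP [x [y [hxy <-]]].
rewrite lt_def hp andbT; apply/eqP => /hE /eqP; by rewrite (negbTE hxy).
Qed.

Lemma adjE (R : realFieldType) (T : finType) (d : T -> T -> R) b :
  ultrametric d -> 0 < b ->
  forall u v, G_adj d b u v = Ple d b u v && ~~ Plt d b u v.
Proof.
move=> /um_facts [h0 hs hp hE _] b0 u v; rewrite /G_adj /Ple /Plt.
case: eqVneq => [->|neq] /=; first by rewrite h0 b0 andbF.
by rewrite eq_le -leNgt.
Qed.

Lemma K0 (R : realFieldType) (T : finType) (d : T -> T -> R) b :
  ultrametric d -> 0 < b -> forall u v, Ple d b u v -> ~~ Plt d b u v ->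
  exists2 x, x \in Fb d b & Plt d b u x || Plt d b v x.
Proof.
move=> hU b0 u v huv nuv.
have [Lr Ls Lt] := eqv_lt hU b0.
have [Er Es Et] := eqv_le hU (ltW b0).
have LE : forall x y, Plt d b x y -> Ple d b x y by move=> x y; exact: ltW.
have [pu hu pur] := rep_ex u (eqv_lt hU b0).
have [pv hv pvr] := rep_ex v (eqv_lt hU b0).
case pue: (pu \in reps (Ple d b)); last first.
  by exists pu; [rewrite inE pue pur | rewrite hu].
case pve: (pv \in reps (Ple d b)); last first.
  by exists pv; [rewrite inE pve pvr | rewrite hv orbT].
have epq : pu = pv.
  apply: (reps_uniq Es pue pve).
  apply: (Et u); first by rewrite Es; exact: LE.
  by apply: (Et v) => //; exact: LE.
move: nuv; rewrite epq in hu.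
by rewrite (Lt pv) // Ls.
Qed.

Lemma Fb_ne (R : realFieldType) (T : finType) (d : T -> T -> R) b :
  ultrametric d -> b \in Sp d -> (0 < #|Fb d b|)%N.
Proof.
move=> hU hb; have b0 := Sp_pos hU hb.
case/SpP: hb => x [y [hxy dxy]].
have [z hz _] := K0 hU b0 (u := x) (v := y) (ltac:(by rewrite /Ple dxy))
  (ltac:(by rewrite /Plt dxy ltxx)).
by apply/card_gt0P; exists z.
Qed.

Lemma Fb_disj (R : realFieldType) (T : finType) (d : T -> T -> R) b1 b2 x :
  b1 != b2 -> x \in Fb d b1 -> x \in Fb d b2 -> False.
Proof.
have H : forall c1 c2, c1 < c2 -> x \in Fb d c1 -> x \in Fb d c2 -> False.
  move=> c1 c2 lt12 /setDP [_ n1] /setDP [+ _]; rewrite inE => /forallP h2.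
  case: (notin_reps n1) => y hy ry.
  have := implyP (h2 y); rewrite /Plt (le_lt_trans hy lt12) => /(_ isT).
  by rewrite leqNgt ry.
move=> ne h1 h2; case: (ltgtP b1 b2) => [l|l|e].
- exact: H l h1 h2.
- exact: H l h2 h1.
- by rewrite e eqxx in ne.
Qed.

Lemma Fb_pos (R : realFieldType) (T : finType) (d : T -> T -> R) b x :
  x \in Fb d b -> exists y : T, (rk y < rk x)%N.
Proof. by case/setDP => _ /notin_reps [y _ h]; exists y. Qed.

Lemma Fb_cover (R : realFieldType) (T : finType) (d : T -> T -> R) (x x0 : T) :
  ultrametric d -> (rk x0 < rk x)%N -> exists2 b, b \in Sp d & x \in Fb d b.
Proof.
move=> hU r0.
have [y ry hmin] := @exists_minR T R [pred y | rk y < rk x]%N (d x) x0 r0.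
exists (d x y).
  apply/SpP; exists x, y; split => //; apply/eqP => exy.
  by move: ry; rewrite /= exy ltnn.
apply/setDP; split.
  rewrite inE; apply/forallP => z; apply/implyP; rewrite /Plt => hz.
  rewrite leqNgt; apply/negP => rz.
  by have := hmin z rz; rewrite leNgt hz.
rewrite inE; apply/negP => /forallP /(_ y) /implyP.
by move: ry => /= ry; rewrite /Ple lexx leqNgt ry => /(_ isT).
Qed.

Lemma Fb_edge (R : realFieldType) (T : finType) (d : T -> T -> R) b w :
  w \in Fb d b -> exists2 z, Ple d b w z && ~~ Plt d b w z & (rk z < rk w)%N.
Proof.
case/setDP => + /notin_reps [z hz rz]; rewrite inE => /forallP /(_ z) /implyP h.
exists z => //; rewrite hz /=; apply/negP => /h; by rewrite leqNgt rz.
Qed.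

Lemma adj_sym (R : realFieldType) (T : finType) (d : T -> T -> R) b :
  ultrametric d -> forall u v, G_adj d b u v = G_adj d b v u.
Proof.
move=> /um_facts [_ hs _ _ _] u v; by rewrite /G_adj eq_sym hs.
Qed.

Lemma nonisoP (T : finType) (e : rel T) u v : e u v -> u \in nonisolated e.
Proof. by move=> h; rewrite inE; apply/existsP; exists v. Qed.

Lemma bip_le1 (R : realFieldType) (T : finType) (d : T -> T -> R) b :
  ultrametric d -> 0 < b ->
  complete_bipartite (nonisolated (G_adj d b)) (G_adj d b) -> (#|Fb d b| <= 1)%N.
Proof.
move=> hU b0 [_ [A [B [hI hUn _ _ he]]]].
have hx := bip_xor hI hUn he.
have [Lr Ls Lt] := eqv_lt hU b0.
have [Er Es Et] := eqv_le hU (ltW b0).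
have aE := adjE hU b0.
have H : forall w1 w2, w1 \in Fb d b -> w2 \in Fb d b -> (rk w1 < rk w2)%N -> False.
  move=> w1 w2 h1 h2 r12.
  have [z1 /andP [ez1 nz1] rz1] := Fb_edge h1.
  have [z2 /andP [ez2 nz2] rz2] := Fb_edge h2.
  have e1 : G_adj d b w1 z1 by rewrite aE ez1.
  have e2 : G_adj d b w2 z2 by rewrite aE ez2.
  have V1 := nonisoP e1; have V2 := nonisoP e2.
  have Vz1 : z1 \in nonisolated (G_adj d b) by apply: (nonisoP (v := w1)); rewrite adj_sym.
  move: (h1) (h2) => /setDP [+ _] /setDP [+ _]; rewrite !inE => /forallP r1 /forallP r2.
  case ple: (Ple d b w1 w2).
    have n12 : ~~ Plt d b w1 w2.
      apply/negP => p; have := implyP (r2 w1); rewrite Ls p => /(_ isT).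
      by rewrite leqNgt r12.
    have n2z : ~~ Plt d b w2 z1.
      apply/negP => p; have := implyP (r2 z1) p.
      by rewrite leqNgt (ltn_trans rz1 r12).
    have p2z : Ple d b w2 z1 by apply: (Et w1) => //; rewrite Es.
    have e12 : G_adj d b w1 w2 by rewrite aE ple.
    have e2z : G_adj d b w2 z1 by rewrite aE p2z.
    move: e1 e12 e2z; rewrite !hx //.
    by case: (w1 \in A); case: (w2 \in A); case: (z1 \in A).
  have e12 : G_adj d b w1 w2 = false by rewrite aE ple.
  have : G_adj d b z1 w2.
    move: e1 e12; rewrite !hx //.
    by case: (w1 \in A); case: (w2 \in A); case: (z1 \in A).
  rewrite aE => /andP [pz _].
  by move: ple; rewrite (Et z1) // Es.
apply/card_le1_eqP => w1 w2 h1 h2.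
case: (ltngtP (rk w1) (rk w2)) => r.
- by case: (H _ _ h1 h2 r).
- by case: (H _ _ h2 h1 r).
- exact: rk_inj.
Qed.

Lemma bip_of1 (R : realFieldType) (T : finType) (d : T -> T -> R) b :
  ultrametric d -> 0 < b -> #|Fb d b| = 1%N ->
  complete_bipartite (nonisolated (G_adj d b)) (G_adj d b).
Proof.
move=> hU b0 /eqP /cards1P [w hw].
have [Lr Ls Lt] := eqv_lt hU b0.
have [Er Es Et] := eqv_le hU (ltW b0).
have aE := adjE hU b0.
have LE : forall x y, Plt d b x y -> Ple d b x y by move=> x y; exact: ltW.
have K : forall u v, Ple d b u v -> ~~ Plt d b u v -> Plt d b u w || Plt d b v w.
  move=> u v h1 h2; have [x] := K0 hU b0 h1 h2.
  by rewrite hw inE => /eqP ->.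
set V := nonisolated (G_adj d b).
have VP : forall u, u \in V -> Ple d b u w.
  move=> u; rewrite inE => /existsP [v]; rewrite aE => /andP [h1 h2].
  case/orP: (K u v h1 h2) => h; first exact: LE.
  by apply: (Et v) => //; exact: LE.
have C : forall u v, u \in V -> v \in V -> ~~ Plt d b u w -> ~~ Plt d b v w -> Plt d b u v.
  move=> u v hu hv nu nv; apply/negPn/negP => nuv.
  have puv : Ple d b u v by apply: (Et w); [exact: VP | rewrite Es; exact: VP].
  by move: (K u v puv nuv); rewrite (negbTE nu) (negbTE nv).
have wF : w \in Fb d b by rewrite hw inE.
have [z /andP [ez nz] _] := Fb_edge wF.
have ewz : G_adj d b w z by rewrite aE ez.
have Vw : w \in V := nonisoP ewz.
have Vz : z \in V by apply: (nonisoP (v := w)); rewrite adj_sym.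
clearbody V.
split; first by apply/set0Pn; exists w.
exists [set u in V | Plt d b u w], (V :\: [set u in V | Plt d b u w]); split.
- by apply/setP => x; rewrite !inE; case: (x \in V); case: (Plt d b x w).
- by apply/setP => x; rewrite !inE; case: (x \in V); case: (Plt d b x w).
- by apply/set0Pn; exists w; rewrite inE Vw Lr.
- by apply/set0Pn; exists z; rewrite !inE Vz Ls nz.
move=> u v hu hv; rewrite aE !inE hu hv /=.
have -> : Ple d b u v by apply: (Et w); [exact: VP | rewrite Es; exact: VP].
case pu: (Plt d b u w); case pv: (Plt d b v w) => /=.
- by rewrite (Lt w) // Ls.
- by apply/negP => p; move: pv; rewrite (Lt u _ _ (etrans (Ls v u) p) pu).
- by apply/negP => p; move: pu; rewrite (Lt v _ _ p pv).
- by rewrite C // ?pu ?pv.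
Qed.

Lemma card_union_seq (T : finType) (I : eqType) (F : I -> {set T}) (s : seq I) :
  uniq s -> (forall i j x, i != j -> x \in F i -> x \in F j -> False) ->
  #|[set x | has (fun i => x \in F i) s]| = (\sum_(i <- s) #|F i|)%N.
Proof.
move=> + hD; elim: s => [|a s IH] /=.
  by move=> _; rewrite big_nil; apply/eqP; rewrite cards_eq0; apply/eqP/setP => x; rewrite !inE.
case/andP => ha us; rewrite big_cons -IH //.
have -> : [set x | has (fun i => x \in F i) (a :: s)] =
          F a :|: [set x | has (fun i => x \in F i) s].
  by apply/setP => x; rewrite !inE.
rewrite cardsU.
have -> : F a :&: [set x | has (fun i => x \in F i) s] = set0.
  apply/setP => x; rewrite !inE; apply/negbTE/negP => /andP [h1 /hasP [i hi h2]].
  apply: (hD a i x) => //; apply/eqP => e; move: ha; by rewrite e hi.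
by rewrite cards0 subn0.
Qed.

Theorem theorem8 (R : realFieldType) (T : finType) (d : T -> T -> R) :
  ultrametric d -> (2 <= #|T|)%N ->
  (in_U d <->
   forall r, r \in Sp d ->
     complete_bipartite (nonisolated (G_adj d r)) (G_adj d r)).
Proof.
move=> hU h2.
case/card_gt0P: (ltnW h2) => t _.
case: (@arg_minnP T t predT (@rk T) isT) => x0 _ hx0.
have HU : [set x | has (fun b => x \in Fb d b) (Sp d)] = [set~ x0].
  apply/setP => x; rewrite !inE; apply/idP/idP.
    case/hasP => b _ hb; have [y ry] := Fb_pos hb.
    apply/eqP => ex; move: ry; rewrite ex => ry.
    by have := hx0 y isT; rewrite leqNgt ry.
  move=> hne; have r0 : (rk x0 < rk x)%N.
    rewrite ltn_neqAle hx0 // andbT; apply/eqP => e.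
    by move: hne; rewrite (rk_inj e) eqxx.
  have [b hb hx] := Fb_cover hU r0.
  by apply/hasP; exists b.
have Hsum : (\sum_(b <- Sp d) #|Fb d b| = #|T| - 1)%N.
  rewrite -card_union_seq; first by rewrite HU cardsC1 subn1.
    exact: undup_uniq.
  move=> i j x; exact: Fb_disj.
rewrite /in_U; split.
- move=> hs r hr; apply: bip_of1 => //; first exact: Sp_pos hr.
  apply: (@sum_ones _ (Sp d) (fun b => #|Fb d b|) _ _ r hr).
    move=> i hi; exact: Fb_ne.
  by rewrite Hsum hs.
- move=> hb; rewrite -Hsum -sum1_size; apply: eq_big_seq => r hr.
  apply/eqP; rewrite eqn_leq (Fb_ne hU hr) /=.
  apply: bip_le1 => //; last exact: hb.
  exact: Sp_pos hr.
Qed.
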